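(* Let $\theta$ be a discrete valuation on Johnstone's dcpo $\mathcal J$ (Scott topology) with total mass $\theta(\mathcal J)=1-r$, where $r>0$. Then $\theta+r\mu$ is not the supremum of a directed family of discrete valuations, where $\mu(U)=1$ for every non-empty Scott-open $U$ and $\mu(\emptyset)=0$.
   Context: Johnstone's dcpo: $\mathcal J=\mathbb N\times(\mathbb N\cup\{\infty\})$ ordered by $(a,b)\le(c,d)$ iff either ($a=c$ and $b\le d$) or ($d=\infty$ and $b\le c$). A valuation is a strict, monotone, modular map from the Scott-open sets to $[0,\infty]$; continuous valuations are ordered pointwise (stochastic order), and the supremum of a directed family is computed pointwise. A discrete valuation is one of the form $\sum_{i=1}^\infty r_i\delta_{x_i}$ ($r_i\in[0,\infty)$, $\delta_x$ the Dirac valuation at $x$). *)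

(* Defs.v *)
From mathcomp Require Import all_boot all_order all_algebra.
From mathcomp Require Import all_classical all_reals all_analysis.
Set Implicit Arguments. Unset Strict Implicit. Unset Printing Implicit Defensive.
Import Order.TTheory GRing.Theory Num.Theory.
Local Open Scope classical_set_scope.
Local Open Scope ring_scope.

(* N ∪ {∞}: None stands for ∞. *)
Definition natinf := option nat.

Definition le_inf (b d : natinf) : Prop :=
  match b, d with
  | _, None => True
  | None, Some _ => False
  | Some m, Some n => (m <= n)%N
  end.

Definition J := (nat * natinf)%type.

Definition Jle (x y : J) : Prop :=
  let: (a, b) := x in let: (c, d) := y in
  (a = c /\ le_inf b d) \/ (d = None /\ le_inf b (Some c)).

Definition Jdirected (D : set J) : Prop :=
  (exists x, D x) /\
  forall x y, D x -> D y -> exists z, D z /\ Jle x z /\ Jle y z.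

Definition Jis_sup (D : set J) (s : J) : Prop :=
  (forall d, D d -> Jle d s) /\
  (forall u, (forall d, D d -> Jle d u) -> Jle s u).

Definition scott_open (U : set J) : Prop :=
  (forall x y, U x -> Jle x y -> U y) /\
  (forall D s, Jdirected D -> Jis_sup D s -> U s -> exists d, D d /\ U d).

Definition discrete_valuation (R : realType) (nu : set J -> \bar R) : Prop :=
  exists (rs : nat -> R) (xs : nat -> J),
    (forall i, 0 <= rs i) /\
    forall U, scott_open U ->
      nu U = (\sum_(0 <= i <oo) (if `[< U (xs i) >] then (rs i)%:E else 0%E))%E.

Definition mu (R : realType) (U : set J) : \bar R :=
  if `[< U = set0 >] then 0%E else 1%E.

Definition val_le (R : realType) (nu1 nu2 : set J -> \bar R) : Prop :=
  forall U, scott_open U -> (nu1 U <= nu2 U)%E.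

Definition val_directed (R : realType) (F : set (set J -> \bar R)) : Prop :=
  (exists nu, F nu) /\
  forall nu1 nu2, F nu1 -> F nu2 ->
    exists nu3, F nu3 /\ val_le nu1 nu3 /\ val_le nu2 nu3.

Definition is_val_sup (R : realType) (F : set (set J -> \bar R))
    (nu : set J -> \bar R) : Prop :=
  forall U, scott_open U -> nu U = ereal_sup [set f U | f in F].

(* Main.v *)
Require Import Defs.
From mathcomp Require Import all_boot all_order all_algebra.
From mathcomp Require Import all_classical all_reals all_analysis.
From mathcomp Require Import lra.
Set Implicit Arguments. Unset Strict Implicit. Unset Printing Implicit Defensive.
Import Order.TTheory GRing.Theory Num.Theory.
Local Open Scope classical_set_scope.
Local Open Scope ring_scope.
Definition gti (K : nat) (b : natinf) : Prop :=
  match b with None => True | Some c => (K < c)%N end.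

Lemma le_inf_trans b c d : Defs.le_inf b c -> Defs.le_inf c d -> Defs.le_inf b d.
Proof.
case: b => [b|]; case: c => [c|]; case: d => [d|] //=; exact: leq_trans.
Qed.

Lemma Jle_refl x : Jle x x.
Proof. case: x => a [b|] /=; left; split => //. Qed.

Lemma Jle_trans x y z : Jle x y -> Jle y z -> Jle x z.
Proof.
case: x => a b; case: y => c d; case: z => e f /=.
case=> [[ac bd]|[dN bc]]; case=> [[ce df]|[fN de]]; subst.
- by left; split => //; apply: le_inf_trans bd df.
- by right; split => //; apply: le_inf_trans bd de.
- by case: f df => // _; right; split.
- by [].
Qed.

Lemma Jle_max e y : Jle (e, None) y -> y = (e, None).
Proof. case: y => c [d|] /=; by case=> [[-> H]|[H1 H2]]. Qed.

Definition upper (U : set J) := forall x y, U x -> Jle x y -> U y.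

Lemma scott_crit U : upper U ->
  (forall a, U (a, None) -> exists m, U (a, Some m)) -> scott_open U.
Proof.
move=> Uup Umax; split => // D s [[d0 Dd0] _] [sub lst] Us.
apply: contrapT => hno.
have nD : forall d, D d -> ~ U d by move=> d Dd Ud; apply: hno; exists d.
case: s sub lst Us => a [b|] sub lst Us.
- have hd : forall d, D d -> exists b', d = (a, Some b') /\ (b' < b)%N.
    move=> [c [d|]] Dd; have := sub _ Dd => /=; case => [[ca hb]|[//]].
      subst c; exists d; split => //; rewrite ltn_neqAle hb andbT.
      apply/negP => /eqP db; subst d; exact: (nD _ Dd Us).
    by have := sub _ Dd => /=; case=> [[_ []]|[]].
  have [b' [_ hb']] := hd _ Dd0.
  have : Jle (a, Some b) (a, Some b.-1).
    apply: lst => d Dd; have [b'' [-> hb'']] := hd _ Dd; left; split => //=.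
    by rewrite -ltnS (ltn_predK hb'').
  case => [[_ /=]|[//]].
  by rewrite -ltnS (ltn_predK hb') ltnn.
- have [m Um] := Umax _ Us.
  have hd : forall d, D d -> exists c b', d = (c, Some b') /\ (b' <= a + m)%N.
    move=> [c [d|]] Dd; have := sub _ Dd => /=.
      case=> [[ca hb]|[_ hb]]; exists c, d; split => //.
        subst c; case: (leqP m d) => hmd.
          exfalso; apply: (nD _ Dd); apply: Uup Um _; by left.
        by apply: leq_trans (ltnW hmd) _; rewrite leq_addl.
      by apply: leq_trans hb (leq_addr _ _).
    case=> [[ca _]|[//]]; subst c; exfalso; exact: (nD _ Dd Us).
  have : Jle (a, None) (a + m.+1, None)%N.
    apply: lst => d Dd; have [c [b' [-> hb']]] := hd _ Dd; right; split => //=.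
    by rewrite addnS; apply: leq_trans hb' (leqnSn _).
  case => [[/eqP]|[_ //]].
  by rewrite -{1}(addn0 a) eqn_add2l.
Qed.

Lemma gti_le K b d : gti K b -> Defs.le_inf b d -> gti K d.
Proof. case: b => [b|]; case: d => [d|] //=; move=> h1 h2; exact: leq_trans h1 h2. Qed.

Definition W K : set J := fun y => (K < y.1)%N /\ gti K y.2.

Lemma W_upper K : upper (W K).
Proof.
move=> [a b] [c d] [/= Ka Kb] /= [[ca bd]|[dN bc]]; subst; split => //=.
- exact: gti_le Kb bd.
- by case: b Kb bc => //= b Kb bc; apply: leq_trans Kb bc.
Qed.

Lemma W_open K : scott_open (W K).
Proof.
apply: scott_crit; first exact: W_upper.
by move=> a [/= Ka _]; exists K.+1; rewrite /W /=; split.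
Qed.

Lemma W_ne K : W K (K.+1, None).
Proof. by rewrite /W /=; split. Qed.

Lemma W_mono K L : (K <= L)%N -> W L `<=` W K.
Proof.
move=> KL [a b] [/= La Lb]; split => /=; first exact: leq_ltn_trans KL La.
by case: b Lb => //= b Lb; apply: leq_ltn_trans KL Lb.
Qed.

Definition Ufill (A : set J) k L : set J :=
  fun y => A y \/ (A (y.1, None) /\ gti k y.2) \/ W L y.

Lemma Ufill_open A k L : upper A -> (L <= k)%N -> scott_open (Ufill A k L).
Proof.
move=> Aup Lk; apply: scott_crit; rewrite /Ufill.
- move=> [a b] [c d] [Ax|[[Aa kb]|Wx]] xy.
  + by left; apply: Aup Ax xy.
  + rewrite /= in Aa; move: xy => /= [[ca bd]|[dN bc]]; subst.
      by right; left; split => //; apply: gti_le kb bd.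
    case: b kb bc => [b|] //= kb bc; right; right; split => //=.
    by apply: leq_ltn_trans Lk (leq_trans kb bc).
  + by right; right; apply: W_upper Wx xy.
- move=> a [Aa|[[Aa _]|[/= La _]]].
  + by exists k.+1; rewrite /Ufill /=; right; left; split.
  + by exists k.+1; rewrite /Ufill /=; right; left; split.
  + by exists L.+1; right; right; rewrite /W /=; split.
Qed.

Lemma setU_open U V : scott_open U -> scott_open V -> scott_open (U `|` V).
Proof.
move=> [Uu Us] [Vu Vs]; split.
- by move=> x y [Ux|Vx] xy; [left; apply: Uu Ux xy|right; apply: Vu Vx xy].
- move=> D s dD sD [Us'|Vs'].
  + by have [d [Dd Ud]] := Us D s dD sD Us'; exists d; split => //; left.
  + by have [d [Dd Vd]] := Vs D s dD sD Vs'; exists d; split => //; right.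
Qed.

Lemma setT_open : scott_open setT.
Proof. by split => // D s [[d Dd] _] _ _; exists d. Qed.

Definition Up (x : nat -> J) (N : nat) (Q : J -> Prop) : set J :=
  fun y => exists i, (i < N)%N /\ Q (x i) /\ Jle (x i) y.

Lemma Up_upper x N Q : upper (Up x N Q).
Proof.
move=> y z [i [iN [Qi le1]]] le2; exists i; split => //; split => //.
exact: Jle_trans le1 le2.
Qed.

Lemma Up_self x N Q i : (i < N)%N -> Q (x i) -> Up x N Q (x i).
Proof. by move=> iN Qi; exists i; split => //; split => //; exact: Jle_refl. Qed.

Definition mx (f : nat -> nat) (N : nat) : nat := \max_(j < N) f j.

Lemma mx_ge f N i : (i < N)%N -> (f i <= mx f N)%N.
Proof.
move=> iN; rewrite /mx.
exact: (@leq_bigmax_cond _ (fun j : 'I_N => true) (fun j : 'I_N => f j) (Ordinal iN)).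
Qed.

Definition snd0 (b : natinf) : nat := match b with Some c => c | None => 0%N end.

Section msum.
Variable R : realType.
Variables (rs : nat -> R) (xs : nat -> J).
Hypothesis rs0 : forall i, 0 <= rs i.

Local Open Scope ereal_scope.

Definition ind (A : set J) i : \bar R := if `[< A (xs i) >] then (rs i)%:E else 0.

Definition msum (A : set J) : \bar R := \sum_(0 <= i <oo) ind A i.

Definition ps (A : set J) (N : nat) : R :=
  (\sum_(0 <= i < N) (if `[< A (xs i) >] then rs i else 0))%R.

Lemma ind_ge0 A i : 0 <= ind A i.
Proof. by rewrite /ind; case: ifP => // _; rewrite lee_fin. Qed.

Lemma msum_ge0 A : 0 <= msum A.
Proof. by apply: nneseries_ge0 => i _ _; exact: ind_ge0. Qed.

Lemma msum_mono A B : A `<=` B -> msum A <= msum B.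
Proof.
move=> AB; apply: lee_nneseries => [i _ _|i _]; first exact: ind_ge0.
rewrite /ind; case: (asboolP (A (xs i))) => Ai.
  by rewrite (asboolT (AB _ Ai)).
by case: ifP => // _; rewrite lee_fin.
Qed.

Lemma msum_modular A B : msum A + msum B = msum (A `|` B) + msum (A `&` B).
Proof.
rewrite /msum -!nneseriesD; try by move=> i _ _; exact: ind_ge0.
apply: congr_lim; apply/funext => n; apply: eq_bigr => i _.
rewrite /ind; do 4 (case: asboolP => ?); rewrite ?adde0 ?add0e //;
  exfalso; firstorder.
Qed.

Lemma sum_ind A N : \sum_(0 <= i < N) ind A i = (ps A N)%:E.
Proof.
rewrite /ps -sumEFin; apply: eq_bigr => i _; rewrite /ind.
by case: ifP.
Qed.

Lemma ps_le_msum A N : (ps A N)%:E <= msum A.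
Proof.
rewrite -sum_ind; apply: nneseries_lim_ge => i _ _; exact: ind_ge0.
Qed.

Lemma ps_mono A B N : (forall i, (i < N)%N -> A (xs i) -> B (xs i)) ->
  (ps A N <= ps B N)%R.
Proof.
move=> AB; rewrite /ps big_nat_cond [X in (_ <= X)%R]big_nat_cond.
apply: ler_sum => i /andP[/andP[_ iN] _].
case: (asboolP (A (xs i))) => Ai; first by rewrite asboolT //; apply: AB.
by case: ifP.
Qed.

Lemma ps0 A N : (forall i, (i < N)%N -> ~ A (xs i)) -> ps A N = 0%R.
Proof.
move=> nA; rewrite /ps big_nat_cond big1 // => i /andP[/andP[_ iN] _].
by rewrite asboolF //; apply: nA.
Qed.

Lemma ps_ge0 A N : (0 <= ps A N)%R.
Proof. by rewrite /ps; apply: sumr_ge0 => i _; case: ifP. Qed.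

End msum.

Section tail.
Variable R : realType.
Variables (rs : nat -> R) (xs : nat -> J).
Hypothesis rs0 : forall i, (0 <= rs i)%R.
Local Open Scope ereal_scope.

Lemma msum_tail (d : R) : msum rs xs setT < +oo -> (0 < d)%R ->
  exists N, forall A, msum rs xs A <= (ps rs xs A N + d)%:E.
Proof.
move=> Tfin d0.
set u := fun n => \sum_(0 <= i < n) ind rs xs setT i.
have ndu : nondecreasing_seq u.
  by apply: ereal_nondecreasing_series => i _ _; exact: ind_ge0.
have Tsup : msum rs xs setT = ereal_sup (range u).
  by rewrite /msum; move/ereal_nondecreasing_cvgn/cvg_lim : ndu => -> //.
have T0 := msum_ge0 xs rs0 setT.
have Tfn : msum rs xs setT \is a fin_num by rewrite ge0_fin_numE.
have : (fine (msum rs xs setT) - d)%:E < ereal_sup (range u).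
  by rewrite -Tsup -{2}(fineK Tfn) lte_fin ltrBlDr ltrDl.
move=> /ereal_sup_gt [y [n _ <-]] hn.
exists n => A.
have split1 := fun B => nneseries_split (f := ind rs xs B) 0 n (fun k _ => ind_ge0 xs rs0 B k).
rewrite add0n in split1.
have tl : \sum_(n <= k <oo) ind rs xs A k <= \sum_(n <= k <oo) ind rs xs setT k.
  apply: lee_nneseries => [i _ _|i _]; first exact: ind_ge0.
  rewrite /ind; case: ifP => _; rewrite asboolT // ?lee_fin //.
have tT0 : 0 <= \sum_(n <= k <oo) ind rs xs setT k.
  by apply: nneseries_ge0 => i _ _; exact: ind_ge0.
have hT := split1 setT; rewrite -/(msum rs xs setT) /u sum_ind in hT hn.
have tfin : \sum_(n <= k <oo) ind rs xs setT k \is a fin_num.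
  rewrite ge0_fin_numE //; apply: le_lt_trans Tfin; rewrite hT.
  by rewrite leeDr // lee_fin ps_ge0.
rewrite /msum (split1 A) sum_ind EFinD; apply: leeD => //.
apply: le_trans tl _.
rewrite -(fineK tfin) lee_fin.
rewrite -(fineK tfin) -EFinD in hT.
rewrite hT /= lte_fin in hn.
lra.
Qed.
End tail.

Lemma msum_fine (R : realType) (rs : nat -> R) xs (rs0 : forall i, (0 <= rs i)%R) A :
  (msum rs xs setT < +oo)%E -> msum rs xs A = (fine (msum rs xs A))%:E.
Proof.
move=> Tf; rewrite fineK // ge0_fin_numE ?msum_ge0 //.
by apply: le_lt_trans Tf; apply: msum_mono.
Qed.

Lemma Up_sub x N Q K : Q `<=` W K -> Up x N Q `<=` W K.
Proof. by move=> QW y [i [_ [Qi le]]]; apply: W_upper (QW _ Qi) le. Qed.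

Lemma Ufill_sub A k L K : A `<=` W K -> (K <= k)%N -> (K <= L)%N ->
  Ufill A k L `<=` W K.
Proof.
move=> AW Kk KL [a b] [Ay|[[Aa kb]|WL]]; first exact: AW.
- rewrite /= in Aa; have [/= Ka _] := AW _ Aa; split => //=.
  by case: b kb => //= b kb; apply: leq_ltn_trans Kk kb.
- exact: W_mono WL.
Qed.

Lemma mu_ne (R : realType) (U : set J) y : U y -> mu R U = 1%E.
Proof.
move=> Uy; rewrite /mu asboolF // => U0; by rewrite U0 in Uy.
Qed.

Lemma mu_le1 (R : realType) (r : R) (U : set J) : (0 <= r)%R ->
  (r%:E * mu R U <= r%:E)%E.
Proof.
by move=> r0; rewrite /mu; case: ifP => _; rewrite ?mule0 ?mule1 // lee_fin.
Qed.

Unset Implicit Arguments.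
Theorem proposition3p12 (R : realType) (theta : set J -> \bar R) (r : R) :
  discrete_valuation theta ->
  theta setT = (1 - r)%:E ->
  0 < r ->
  ~ exists F : set (set J -> \bar R),
      (forall nu, F nu -> discrete_valuation nu) /\
      val_directed F /\
      is_val_sup F (fun U => (theta U + r%:E * mu R U)%E).
Proof.
move=> [rt [xt [rt0 hth]]] hT r0 [F [Fdisc [[[nu0 Fnu0] Fdir] Fsup]]].
have thm : forall U, scott_open U -> theta U = msum rt xt U.
  by move=> U hU; rewrite hth.
have ub : forall nu, F nu -> forall U, scott_open U ->
    (nu U <= msum rt xt U + r%:E)%E.
  move=> nu Fnu U hU; rewrite -thm //.
  apply: le_trans (leeD2l _ (mu_le1 U (ltW r0))).
  by rewrite Fsup //; apply: ereal_sup_ubound; exists nu.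
have lb : forall U y, scott_open U -> U y -> forall c, c < r ->
    exists nu, F nu /\ (c%:E < nu U)%E.
  move=> U y hU Uy c cr.
  have : (c%:E < theta U + r%:E * mu R U)%E.
    rewrite (mu_ne R Uy) mule1 thm //.
    apply: lt_le_trans (leeD2r _ (msum_ge0 xt rt0 U)).
    by rewrite add0e lte_fin.
  rewrite Fsup // => /ereal_sup_gt [z [nu Fnu <-]] h.
  by exists nu.
have thT : (msum rt xt setT < +oo)%E by rewrite -thm ?hT ?ltry //; exact: setT_open.
have tot : forall nu, F nu -> (nu setT <= 1%:E)%E.
  move=> nu Fnu; apply: le_trans (ub _ Fnu _ setT_open) _.
  by rewrite -thm ?hT -?EFinD ?lee_fin ?subrK //; exact: setT_open.
have rep : forall nu, F nu -> exists rs xs, (forall i, 0 <= rs i) /\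
    (forall U, scott_open U -> nu U = msum rs xs U) /\ (msum rs xs setT < +oo)%E.
  move=> nu Fnu; have [rs [xs [rs0 h]]] := Fdisc _ Fnu.
  have hs : nu setT = msum rs xs setT by apply: h; exact: setT_open.
  exists rs, xs; split => //; split; first by move=> U hU; exact: h.
  by rewrite -hs; apply: le_lt_trans (tot _ Fnu) _; exact: ltry.
pose d := r / 10.
have d0 : 0 < d by rewrite divr_gt0.
have hrd : r - d < r by rewrite ltrBlDr ltrDl.
have [Nt hNt] := msum_tail rt0 thT d0.
pose K1 := mx (fun i => (xt i).1) Nt.
pose B1 := W K1.
have thB1 : (msum rt xt B1 <= d%:E)%E.
  apply: le_trans (hNt B1) _; rewrite ps0 ?add0r // => i iN [/= hK _].
  by move: hK; rewrite ltnNge (mx_ge (fun i => (xt i).1) iN).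
have ubB1 : forall nu, F nu -> forall V, scott_open V -> V `<=` B1 ->
    (nu V <= (d + r)%:E)%E.
  move=> nu Fnu V hV VB; apply: le_trans (ub _ Fnu _ hV) _.
  rewrite EFinD leeD2r //; apply: le_trans thB1.
  exact: msum_mono.
have [nu1 [Fnu1 hnu1]] := lb B1 _ (W_open K1) (W_ne K1) (r - d) hrd.
have [r1 [x1 [r10 [h1 T1]]]] := rep _ Fnu1.
have [N1 hN1] := msum_tail r10 T1 d0.
pose K2 := maxn K1 (mx (fun i => (x1 i).1) N1).
pose B2 := W K2.
have [nu2 [Fnu2 hnu2]] := lb B2 _ (W_open K2) (W_ne K2) (r - d) hrd.
have [nu3 [Fnu3 [le13 le23]]] := Fdir _ _ Fnu1 Fnu2.
have [r3 [x3 [r30 [h3 T3]]]] := rep _ Fnu3.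
have [N3 hN3] := msum_tail r30 T3 d0.
pose L2 := maxn K2 (maxn (mx (fun i => (x3 i).1) N3) (mx (fun i => snd0 (x3 i).2) N3)).
pose U2 := Ufill (Up x1 N1 B1) L2 L2.
pose Q3 := fun z : J => z.2 = None /\ B2 z.
have K12 : (K1 <= K2)%N by rewrite leq_maxl.
have K2L2 : (K2 <= L2)%N by rewrite leq_maxl.
have K1L2 : (K1 <= L2)%N by apply: leq_trans K12 K2L2.
have U2o : scott_open U2 by apply: Ufill_open; [exact: Up_upper|].
have U2B1 : U2 `<=` B1.
  by apply: Ufill_sub => //; apply: Up_sub.
have B2o : scott_open B2 := W_open K2.
have B2B1 : B2 `<=` B1 by apply: W_mono.
have e1 : ((r - d - d)%:E < msum r1 x1 U2)%E.
  apply: lt_le_trans (ps_le_msum x1 r10 U2 N1); rewrite lte_fin.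
  have := hN1 B1; rewrite -h1; last exact: W_open.
  move=> hb.
  have := lt_le_trans hnu1 hb; rewrite lte_fin => hb'.
  have : ps r1 x1 B1 N1 <= ps r1 x1 U2 N1.
    by apply: (ps_mono r10) => i iN Bi; left; apply: Up_self.
  lra.
have e2 : (msum r1 x1 U2 <= msum r3 x3 U2)%E.
  by rewrite -h1 // -h3 //; apply: le13.
have e3 : ((r - d)%:E < msum r3 x3 B2)%E.
  by rewrite -h3 //; apply: lt_le_trans hnu2 _; apply: le23.
have e4 : (msum r3 x3 (U2 `|` B2) <= (d + r)%:E)%E.
  rewrite -h3; last exact: setU_open.
  by apply: ubB1 => //; [exact: setU_open|move=> z [|]; [apply: U2B1|apply: B2B1]].
have e5 := msum_modular x3 r30 U2 B2.
have e6 : (msum r3 x3 (U2 `&` B2) <= (ps r3 x3 Q3 N3 + d)%:E)%E.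
  apply: le_trans (hN3 _) _; rewrite lee_fin lerD2r.
  apply: (ps_mono r30) => i iN [U2i B2i]; split => //.
  have ha : ((x3 i).1 <= L2)%N.
    apply: leq_trans (mx_ge (fun i => (x3 i).1) iN) _.
    by rewrite /L2 leq_max leq_max leqnn orbT.
  have hb : (snd0 (x3 i).2 <= L2)%N.
    apply: leq_trans (mx_ge (fun i => snd0 (x3 i).2) iN) _.
    by rewrite /L2 leq_max leq_max leqnn !orbT.
  move: U2i B2i ha hb; case: (x3 i) => a b.
  move=> [[j [jN [B1j lej]]]|[[_ kb]|[/= La _]]] [/= Ka Kb] /= ha hb.
  - have hj : ((x1 j).1 <= K2)%N.
      apply: leq_trans (mx_ge (fun i => (x1 i).1) jN) _.
      by rewrite /K2 leq_max leqnn orbT.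
    move: lej hj; case: (x1 j) => c e /= [[ca _]|[bN _]] hj; last by [].
    by subst c; move: hj; rewrite leqNgt Ka.
  - by case: b kb Kb hb => //= b kb _ hb; move: kb; rewrite ltnNge hb.
  - by move: La; rewrite ltnNge ha.
pose P3 := ps r3 x3 Q3 N3.
have stage2 : r - 5 * d <= P3.
  move: e1 e2 e3 e4 e5 e6.
  rewrite (msum_fine r10 U2 T1) (msum_fine r30 U2 T3) (msum_fine r30 B2 T3).
  rewrite (msum_fine r30 (U2 `|` B2) T3) (msum_fine r30 (U2 `&` B2) T3).
  rewrite !lte_fin !lee_fin -!EFinD => g1 g2 g3 g4 g5 g6.
  have g5' := EFin_inj g5.
  rewrite -/P3 in g6; lra.
pose B4 := W L2.
have [nu5 [Fnu5 hnu5]] := lb B4 _ (W_open L2) (W_ne L2) (r - d) hrd.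
have [nu4 [Fnu4 [le34 le54]]] := Fdir _ _ Fnu3 Fnu5.
have [r4 [x4 [r40 [h4 T4]]]] := rep _ Fnu4.
have [N4 hN4] := msum_tail r40 T4 d0.
pose L3 := maxn K1 (mx (fun i => (x4 i).1) N4).
pose U3 := Ufill (Up x3 N3 Q3) L3 L3.
have K1L3 : (K1 <= L3)%N by rewrite leq_maxl.
have U3o : scott_open U3 by apply: Ufill_open; [exact: Up_upper|].
have U3B1 : U3 `<=` B1.
  apply: Ufill_sub => //; apply: Up_sub => z [_ Bz]; exact: B2B1.
have B4o : scott_open B4 := W_open L2.
have B4B1 : B4 `<=` B1 by apply: W_mono.
have f1 : (P3%:E <= msum r4 x4 U3)%E.
  rewrite -h4 //; apply: le_trans (le34 _ U3o); rewrite h3 //.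
  apply: le_trans (ps_le_msum x3 r30 U3 N3); rewrite lee_fin.
  by apply: (ps_mono r30) => i iN Qi; left; apply: Up_self.
have f3 : ((r - d)%:E < msum r4 x4 B4)%E.
  by rewrite -h4 //; apply: lt_le_trans hnu5 _; apply: le54.
have f4 : (msum r4 x4 (U3 `|` B4) <= (d + r)%:E)%E.
  rewrite -h4; last exact: setU_open.
  by apply: ubB1 => //; [exact: setU_open|move=> z [|]; [apply: U3B1|apply: B4B1]].
have f5 := msum_modular x4 r40 U3 B4.
have f6 : (msum r4 x4 (U3 `&` B4) <= d%:E)%E.
  apply: le_trans (hN4 _) _; rewrite ps0 ?add0r // => i iN [U3i B4i].
  have ha : ((x4 i).1 <= L3)%N.
    apply: leq_trans (mx_ge (fun i => (x4 i).1) iN) _.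
    by rewrite /L3 leq_max leqnn orbT.
  have hQ : forall j, (j < N3)%N -> Q3 (x3 j) -> forall y, Jle (x3 j) y -> (y.1 <= L2)%N.
    move=> j jN [Nj _] y; case: (x3 j) Nj (mx_ge (fun i => (x3 i).1) jN) => e f /= -> he.
    move/Jle_max => -> /=; apply: leq_trans he _.
    by rewrite /L2 leq_max leq_max leqnn orbT.
  move: U3i B4i ha; case: (x4 i) => a b.
  move=> [[j [jN [Qj lej]]]|[[[j [jN [Qj lej]]] _]|[/= La _]]] [/= Ka _] /= ha.
  - by have := hQ _ jN Qj _ lej; rewrite /= leqNgt Ka.
  - by have := hQ _ jN Qj _ lej; rewrite /= leqNgt Ka.
  - by move: La; rewrite ltnNge ha.
move: f1 f3 f4 f5 f6.
rewrite (msum_fine r40 U3 T4) (msum_fine r40 B4 T4).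
rewrite (msum_fine r40 (U3 `|` B4) T4) (msum_fine r40 (U3 `&` B4) T4).
rewrite !lte_fin !lee_fin -!EFinD => g1 g3 g4 g5 g6.
have g5' := EFin_inj g5.
have : r <= 8 * d by lra.
rewrite /d; lra.
Qed.
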